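(* Let $q$ be a power of an odd prime $p\neq 3$ with $3\mid q-1$, let $\tau\in\mathbb{F}_q\setminus\{0,1/4,-1/50\}$, and let $\mathfrak{C}/\mathbb{F}_q$ be the genus $2$ curve $y^2=x^6+x^3+\tau$ with function field $F$ and $N=\#\mathbb{P}^1_F$ rational places. Then for all integers $t,\ell$ with $1\le t<\ell\le\lfloor N/3\rfloor-1$ there exists a $q$-ary linear locally repairable code with locality $2$ and parameters $$[\,n=3\ell,\ k=2t+1,\ d\ge n-3t-1\,]_q$$ whose Singleton-optimal defect is at most $1$.
   Context: $\mathbb{P}^1_F$ is the set of rational (degree one) places of the function field $F=\mathbb{F}_q(x,y)$. A code $\mathcal{C}\subseteq\mathbb{F}_q^n$ has locality $r$ if for every coordinate $i$ there is a set $I_i\subseteq\{1,\dots,n\}\setminus\{i\}$ with $|I_i|=r$ such that for $a\ne a'$ in $\mathbb{F}_q$ the restrictions to $I_i$ of $\{c\in\mathcal{C}:c_i=a\}$ and $\{c\in\mathcal{C}:c_i=a'\}$ are disjoint. For an $[n,k,d]_q$ code with locality $r$ the Singleton-optimal defect is $\Delta=n-k-\lceil k/r\rceil+2-d\ge0$; optimal means $\Delta=0$, almost optimal means $\Delta=1$. *)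

(* Defs.v *)
From HB Require Import structures.
From mathcomp Require Import all_boot all_order all_algebra all_field.
Set Implicit Arguments. Unset Strict Implicit. Unset Printing Implicit Defensive.
Import Order.TTheory GRing.Theory Num.Theory.
Local Open Scope ring_scope.

Definition wt (F : fieldType) (n : nat) (v : 'rV[F]_n) : nat :=
  #|[set i : 'I_n | v 0 i != 0]|.

Definition is_min_dist (F : fieldType) (n : nat) (C : {vspace 'rV[F]_n}) (d : nat) : Prop :=
  (exists2 c, c \in C & c != 0 /\ wt c = d) /\
  (forall c, c \in C -> c != 0 -> (d <= wt c)%N).

Definition has_locality (F : fieldType) (n : nat) (C : {vspace 'rV[F]_n}) (r : nat) : Prop :=
  forall i : 'I_n, exists I : {set 'I_n},
    [/\ i \notin I, #|I| = r &
      forall a a' : F, a != a' ->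
        forall c c', c \in C -> c' \in C -> c 0 i = a -> c' 0 i = a' ->
          ~ (forall j, j \in I -> c 0 j = c' 0 j)].

Definition ceil_div (k r : nat) : nat := ((k + r.-1) %/ r)%N.

Definition lrc_defect (n k d r : nat) : int :=
  (n%:Z - k%:Z - (ceil_div k r)%:Z + 2 - d%:Z)%R.

(* The affine model is smooth (f = x^6+x^3+tau is squarefree for p <> 2,3 and
   tau <> 0, 1/4), so each affine F_q-point gives exactly one rational place;
   since deg f = 6 is even with square leading coefficient 1, there are exactly
   two rational places at infinity. *)
Definition num_rat_places (F : finFieldType) (tau : F) : nat :=
  (#|[set xy : F * F | (xy.2 ^+ 2 == xy.1 ^+ 6 + xy.1 ^+ 3 + tau)%R]| + 2)%N.

(* Main.v *)
Require Import Defs.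
From HB Require Import structures.
From mathcomp Require Import all_boot all_order all_algebra all_field.
From mathcomp Require Import all_solvable zify ring.
Set Implicit Arguments. Unset Strict Implicit. Unset Printing Implicit Defensive.
Import Order.TTheory GRing.Theory Num.Theory.
Local Open Scope ring_scope.

Ltac slia := repeat match goal with H : _ |- _ => clear H end; lia.

Lemma card_roots_lt (F : finFieldType) (p : {poly F}) :
  p != 0 -> (#|[set x | root p x]| < size p)%N.
Proof.
move=> pn0; rewrite cardE; apply: max_poly_roots => //; last exact: enum_uniq.
by apply/allP => x; rewrite mem_enum inE.
Qed.

Lemma Qnz (F : fieldType) (c : F) (al be : {poly F}) :
  2%:R != 0 :> F -> (al != 0) || (be != 0) ->
  ('X^2 - 'X - c%:P) * 'X^2 * be ^+ 3 + 2%:R%:P * al ^+ 3 != 0.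
Proof.
move=> two alb.
have sK : size ('X^2 - 'X - c%:P : {poly F}) = 3%N.
  have sX2 : size ('X^2 : {poly F}) = 3%N by exact: size_polyXn.
  rewrite -addrA size_polyDl sX2 //.
  apply: (leq_ltn_trans (size_polyD _ _)); rewrite size_polyN size_polyX.
  by rewrite gtn_max /= size_polyN (leq_ltn_trans (size_polyC_leq1 _)).
have Kn0 : ('X^2 - 'X - c%:P : {poly F}) != 0 by rewrite -size_poly_eq0 sK.
have X2n0 : ('X^2 : {poly F}) != 0 by rewrite -size_poly_eq0 size_polyXn.
have tn0 : (2%:R%:P : {poly F}) != 0 by rewrite polyC_eq0.
apply/negP; rewrite addr_eq0 => /eqP E.
have [be0|ben0] := eqVneq be 0.
  move: E; rewrite be0 expr0n /= mulr0 => /eqP; rewrite eq_sym oppr_eq0 mulf_eq0 (negbTE tn0) /=.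
  by rewrite expf_eq0 /=; move: alb; rewrite be0 eqxx orbF => /negbTE ->.
have b3 : be ^+ 3 != 0 by rewrite expf_neq0.
move: (congr1 (size : {poly F} -> nat) E); rewrite size_polyN.
rewrite (size_mul (mulf_neq0 Kn0 X2n0) b3) (size_mul Kn0 X2n0) sK size_polyXn.
have [al0|aln0] := eqVneq al 0.
  rewrite al0 expr0n /= mulr0 size_poly0; slia.
have a3 : al ^+ 3 != 0 by rewrite expf_neq0.
have s2 : size (2%:R%:P : {poly F}) = 1%N by rewrite size_polyC two.
rewrite (size_mul tn0 a3) s2.
have e1 := size_exp be 3; have e2 := size_exp al 3.
have h1 : (0 < size (be ^+ 3))%N by rewrite size_poly_gt0.
have h2 : (0 < size (al ^+ 3))%N by rewrite size_poly_gt0.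
move=> H; move: e1 e2 h1 h2 H; move: (size (be ^+ 3)) (size (al ^+ 3)) (size be) (size al) => A B C D; slia.
Qed.

Lemma sizeK (F : fieldType) (c : F) : size ('X^2 - 'X - c%:P : {poly F}) = 3%N.
Proof.
have sX2 : size ('X^2 : {poly F}) = 3%N by exact: size_polyXn.
rewrite -addrA size_polyDl sX2 //.
apply: (leq_ltn_trans (size_polyD _ _)); rewrite size_polyN size_polyX.
by rewrite gtn_max /= size_polyN (leq_ltn_trans (size_polyC_leq1 _)).
Qed.

Lemma zero_bound (F : fieldType) (c : F) (t l : nat) (U : 'I_l -> F)
  (Xg : 'I_l -> 'I_3 -> F) (a0 b1 : {poly F}) :
  2%:R != 0 :> F -> injective U -> (forall j, U j != 0) ->
  (forall j k, 2%:R * U j * Xg j k ^+ 3 = U j ^+ 2 - U j - c) ->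
  (forall j, injective (Xg j)) ->
  (size a0 <= t.+1)%N -> (size b1 <= t)%N -> (a0 != 0) || (b1 != 0) ->
  (#|[set p : 'I_l * 'I_3 | (a0.[U p.1] + Xg p.1 p.2 * U p.1 * b1.[U p.1] == 0)%R]|
     <= 3 * t + 1)%N.
Proof.
move=> two Uinj Unz Hcub Xinj sa0 sb1 nz.
set Z := [set p | _].
pose J3 := [set j | (a0.[U j] == 0) && (b1.[U j] == 0)].
pose J1 := [set j | (j \notin J3) && [exists k, (j, k) \in Z]].
have stepA : (#|Z| <= 3 * #|J3| + #|J1|)%N.
  have sub : Z \subset setX J3 setT :|: [set p in Z | p.1 \notin J3].
    apply/subsetP => -[j k] pZ; rewrite in_setU in_setX in_setT andbT [X in _ || X]in_set pZ /=.
    by case: (j \in J3).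
  apply: (leq_trans (subset_leq_card sub)); apply: (leq_trans (leq_card_setU _ _)).
  rewrite cardsX cardsT card_ord mulnC leq_add2l.
  rewrite -(@card_in_imset _ _ fst); last first.
    move=> [j k] [j' k']; rewrite !inE /= => /andP[z1 n1] /andP[z2 n2] /= ejj.
    subst j'; congr (_, _); apply/eqP; apply: contraNT n1 => nk.
    have xn : Xg j k - Xg j k' != 0 by rewrite subr_eq0 (inj_eq (Xinj j)).
    move/eqP: z1 => z1; move/eqP: z2 => z2.
    have hb : (Xg j k - Xg j k') * U j * b1.[U j] = (a0.[U j] + Xg j k * U j * b1.[U j]) - (a0.[U j] + Xg j k' * U j * b1.[U j]) by ring.
    rewrite z1 z2 subrr in hb.
    move/eqP: hb; rewrite !mulf_eq0 (negbTE xn) (negbTE (Unz j)) /= => /eqP b0.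
    by move: z1; rewrite b0 !mulr0 addr0 => ->; rewrite !eqxx.
  apply: subset_leq_card; apply/subsetP => j /imsetP[[j' k] pz ->] /=.
  move: pz; rewrite !inE /= => /andP[pz ->] /=.
  by apply/existsP; exists k; rewrite inE.
pose rs3 := [seq U j | j <- enum J3].
have urs3 : uniq rs3 by rewrite map_inj_uniq ?enum_uniq.
have szrs3 : size rs3 = #|J3| by rewrite size_map -cardE.
pose P := \prod_(z <- rs3) ('X - z%:P).
have Pmon : P \is monic by apply: monic_prod_XsubC.
have Pn0 : P != 0 by apply: monic_neq0.
have sP : size P = #|J3|.+1 by rewrite size_prod_XsubC szrs3.
have memrs3 j : (U j \in rs3) = (j \in J3) by rewrite mem_map // mem_enum.
have [al Eal] : exists al, a0 = al * P.
  apply: uniq_roots_prod_XsubC; last by rewrite uniq_rootsE.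
  apply/allP => z /mapP[j]; rewrite mem_enum inE => /andP[/eqP h _] ->.
  by rewrite /root h.
have [be Ebe] : exists be, b1 = be * P.
  apply: uniq_roots_prod_XsubC; last by rewrite uniq_rootsE.
  apply/allP => z /mapP[j]; rewrite mem_enum inE => /andP[_ /eqP h] ->.
  by rewrite /root h.
have alb : (al != 0) || (be != 0).
  by move: nz; rewrite Eal Ebe !mulf_eq0 (negbTE Pn0) !orbF.
pose Q := ('X^2 - 'X - c%:P) * 'X^2 * be ^+ 3 + 2%:R%:P * al ^+ 3.
have Qn0 : Q != 0 by apply: Qnz.
have sT1 : (3 * #|J3| + size (('X^2 - 'X - c%:P) * 'X^2 * be ^+ 3)%R <= 3 * t + 2)%N.
  have [be0|ben0] := eqVneq be 0.
    rewrite be0 expr0n /= mulr0 size_poly0 addn0.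
    have [al0|aln0] := eqVneq al 0; first by move: alb; rewrite al0 be0 eqxx.
    have sa := sa0; rewrite Eal (size_Mmonic aln0 Pmon) sP in sa; move: sa.
    have h : (0 < size al)%N by rewrite size_poly_gt0.
    move: (size al) h => A; move: #|J3| => J; slia.
  have sb := sb1; rewrite Ebe (size_Mmonic ben0 Pmon) sP in sb.
  have h1 := size_polyMleq (('X^2 - 'X - c%:P) * 'X^2) (be ^+ 3).
  have h2 := size_polyMleq ('X^2 - 'X - c%:P) ('X^2 : {poly F}).
  have h3 := size_poly_exp_leq be 3.
  have h4 : size ('X^2 : {poly F}) = 3%N by exact: size_polyXn.
  have h5 := sizeK c.
  have h6 : (0 < size be)%N by rewrite size_poly_gt0.
  move: h1 h2 h3 h4 h5 h6 sb.
  move: (size (('X^2 - 'X - c%:P) * 'X^2 * be ^+ 3)) (size (('X^2 - 'X - c%:P) * 'X^2)) (size (be ^+ 3)) (size ('X^2 : {poly F})) (size ('X^2 - 'X - c%:P)) (size be).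
  move=> A B C D E G; move: #|J3| => J; slia.
have sT2 : (3 * #|J3| + size (2%:R%:P * al ^+ 3)%R <= 3 * t + 2)%N.
  have [al0|aln0] := eqVneq al 0.
    rewrite al0 expr0n /= mulr0 size_poly0 addn0.
    have [be0|ben0] := eqVneq be 0; first by move: alb; rewrite al0 be0 eqxx.
    have sb := sb1; rewrite Ebe (size_Mmonic ben0 Pmon) sP in sb; move: sb.
    have h : (0 < size be)%N by rewrite size_poly_gt0.
    move: (size be) h => A; move: #|J3| => J; slia.
  have sa := sa0; rewrite Eal (size_Mmonic aln0 Pmon) sP in sa.
  have h1 := size_polyMleq (2%:R%:P : {poly F}) (al ^+ 3).
  have h2 := size_polyC_leq1 (2%:R : F).
  have h3 := size_poly_exp_leq al 3.
  have h6 : (0 < size al)%N by rewrite size_poly_gt0.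
  move: h1 h2 h3 h6 sa.
  move: (size (2%:R%:P * al ^+ 3)) (size (2%:R%:P : {poly F})) (size (al ^+ 3)) (size al).
  move=> A B C D; move: #|J3| => J; slia.
have sQ : (3 * #|J3| + size Q <= 3 * t + 2)%N.
  have := size_polyD (('X^2 - 'X - c%:P) * 'X^2 * be ^+ 3) (2%:R%:P * al ^+ 3).
  rewrite -/Q; move: sT1 sT2; move: (size Q) (size (('X^2 - 'X - c%:P) * 'X^2 * be ^+ 3)) (size (2%:R%:P * al ^+ 3)) => A B C; move: #|J3| => J; slia.
pose rs1 := [seq U j | j <- enum J1].
have urs1 : uniq rs1 by rewrite map_inj_uniq ?enum_uniq.
have szrs1 : size rs1 = #|J1| by rewrite size_map -cardE.
have rQ : all (root Q) rs1.
  apply/allP => z /mapP[j]; rewrite mem_enum inE => /andP[nJ3 /existsP[k]] zk ->.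
  move: zk; rewrite inE /= => /eqP zk.
  have PU : P.[U j] != 0.
    by apply: contraNneq nJ3 => h; rewrite -memrs3 -root_prod_XsubC /root h.
  have ea : al.[U j] = - (Xg j k * U j * be.[U j]).
    apply/eqP; rewrite -subr_eq0 opprK.
    have : (al.[U j] + Xg j k * U j * be.[U j]) * P.[U j] = 0.
      rewrite -[RHS]zk Eal Ebe !hornerM; ring.
    by move/eqP; rewrite mulf_eq0 (negbTE PU) orbF.
  rewrite /root /Q !(hornerD, hornerM, hornerN, hornerC, hornerX, hornerXn, horner_exp) ea.
  have -> : forall (K u x b : F), K * u ^+ 2 * b ^+ 3 + 2%:R * (- (x * u * b)) ^+ 3 = b ^+ 3 * u ^+ 2 * (K - 2%:R * u * x ^+ 3).
    by move=> K u x b; ring.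
  by rewrite Hcub subrr mulr0.
have := max_poly_roots Qn0 rQ urs1; rewrite szrs1 => hJ1.
move: stepA sQ hJ1; move: #|Z| #|J3| #|J1| (size Q) => A B C D; slia.
Qed.

Lemma card_pair_le (T1 T2 : finType) (A : {set T1 * T2}) (B : {set T1}) (k : nat) :
  (forall p, p \in A -> p.1 \in B) ->
  (forall u, #|[set x | (u, x) \in A]| <= k)%N -> (#|A| <= #|B| * k)%N.
Proof.
move=> AB kb.
rewrite -sum1_card (partition_big fst (mem B)) /=; last by move=> p /AB.
rewrite -sum_nat_const; apply: leq_sum => u uB.
rewrite sum1_card; apply: leq_trans (kb u).
have -> : #|[pred i | (i \in A) && (i.1 == u)]| = #|[set i in A | i.1 == u]|.
  by apply: eq_card => i; rewrite inE.
have pinj : injective (fun x : T2 => (u, x)) by move=> x y [].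
rewrite -(card_imset _ pinj).
apply: subset_leq_card; apply/subsetP => -[u' x]; rewrite inE /= => /andP[pA /eqP eu].
subst u'; apply/imsetP; exists x => //; by rewrite inE.
Qed.

Lemma card_roots_le (F : finFieldType) (p : {poly F}) (n : nat) :
  p != 0 -> (size p <= n.+1)%N -> (#|[set x | root p x]| <= n)%N.
Proof. move=> pn0 sp; have := card_roots_lt pn0; move: sp; slia. Qed.

Lemma count_good (F : finFieldType) (tau : F) :
  2%:R != 0 :> F -> tau != 4%:R^-1 ->
  (#|[set xy : F * F | (xy.2 ^+ 2 == xy.1 ^+ 6 + xy.1 ^+ 3 + tau)%R]| <=
   3 * #|[set u : F | ((u != 0) && (u ^+ 2 - u - (tau - 4%:R^-1) != 0) &&
      [exists x, 2%:R * u * x ^+ 3 == u ^+ 2 - u - (tau - 4%:R^-1)])%R]| + 2)%N.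
Proof.
move=> two ntau.
set c := tau - 4%:R^-1.
have cn0 : c != 0 by rewrite subr_eq0.
set S := [set xy | _]; set Good := [set u | _].
pose T := [set p : F * F | (p.1 != 0) && (2%:R * p.1 * p.2 ^+ 3 == p.1 ^+ 2 - p.1 - c)].
pose h : F := 2%:R^-1.
have h2 : 2%:R * h = 1 by rewrite mulfV.
have h4 : 4%:R^-1 = h * h :> F by rewrite -invfM -natrM.
pose phi := fun xy : F * F => (xy.2 + xy.1 ^+ 3 + h, xy.1).
have phinj : injective phi.
  move=> [x y] [x' y'] [e1 e2]; rewrite /= in e1 e2; subst x'.
  by move/addIr/addIr: e1 => ->.
have ST : (#|S| <= #|T|)%N.
  rewrite -(card_imset _ phinj); apply: subset_leq_card; apply/subsetP => _ /imsetP[[x y] xyS ->].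
  move: xyS; rewrite !inE /= => /eqP E.
  have key : 2%:R * (y + x ^+ 3 + h) * x ^+ 3 = (y + x ^+ 3 + h) ^+ 2 - (y + x ^+ 3 + h) - c.
    apply/eqP; rewrite -subr_eq0 /c h4.
    have -> : tau = y ^+ 2 - x ^+ 6 - x ^+ 3 by rewrite E; ring.
    have -> : 2%:R * (y + x ^+ 3 + h) * x ^+ 3 - ((y + x ^+ 3 + h) ^+ 2 - (y + x ^+ 3 + h) - (y ^+ 2 - x ^+ 6 - x ^+ 3 - h * h)) = (1 - 2%:R * h) * (h + y) by ring.
    by rewrite h2 subrr mul0r.
  rewrite key eqxx andbT.
  apply: contra cn0 => /eqP u0; move: key; rewrite u0 mulr0 mul0r expr0n /= sub0r oppr0 sub0r.
  by move/eqP; rewrite eq_sym oppr_eq0.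
apply: (leq_trans ST).
pose Zr := [set u | root ('X^2 - 'X - c%:P) u].
have Zr2 : (#|Zr| <= 2)%N.
  apply: card_roots_le; last by rewrite sizeK.
  by rewrite -size_poly_eq0 sizeK.
have sub : T \subset [set p in T | p.1 \in Good] :|: setX Zr [set 0].
  apply/subsetP => -[u x] pT; rewrite in_setU in_setX [X in X || _]in_set pT /=.
  move: pT; rewrite inE /= => /andP[un0 /eqP e].
  have [K0|Kn0] := eqVneq (u ^+ 2 - u - c) 0.
    apply/orP; right; apply/andP; split.
      by rewrite inE /root !(hornerD, hornerN, hornerC, hornerX, hornerXn) K0.
    move: e; rewrite K0 => /eqP; rewrite !mulf_eq0 (negbTE two) (negbTE un0) /=.
    by rewrite in_set1 => /or3P[].
  apply/orP; left; rewrite inE un0 Kn0 /=; apply/existsP; exists x; exact/eqP.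
apply: (leq_trans (subset_leq_card sub)); apply: (leq_trans (leq_card_setU _ _)).
rewrite cardsX cards1 muln1 mulnC; apply: leq_add => //.
apply: card_pair_le => [p|u]; first by rewrite inE => /andP[].
have [u0|un0] := eqVneq u 0.
  rewrite (_ : [set x | _] = set0) ?cards0 //; apply/setP => x; rewrite !inE u0 /=.
  by rewrite eqxx.
pose pu := (2%:R * u)%:P * 'X^3 - (u ^+ 2 - u - c)%:P.
have pun0 : pu != 0.
  apply/eqP => /(congr1 (fun q : {poly F} => q`_3)).
  rewrite coefB coefCM coefXn coefC coef0 /= mulr1 subr0 => /eqP.
  by rewrite mulf_eq0 (negbTE two) (negbTE un0).
apply: (leq_trans _ (card_roots_le (n := 3) pun0 _)).
  apply: subset_leq_card; apply/subsetP => x; rewrite !inE /= => /andP[/andP[_ /eqP e] _].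
  by rewrite /root /pu !(hornerD, hornerN, hornerC, hornerX, hornerXn, hornerM) e subrr.
apply: (leq_trans (size_polyD _ _)); rewrite geq_max size_polyN; apply/andP; split; last by apply: (leq_trans (size_polyC_leq1 _)).
  apply: (leq_trans (size_polyMleq _ _)); rewrite size_polyXn.
  move: (size_polyC_leq1 (2%:R * u)); move: (size ((2%:R * u)%:P)) => A; slia.
Qed.

Lemma prim3 (F : finFieldType) : (3 %| #|F|.-1)%N -> exists w : F, 3.-primitive_root w.
Proof.
move=> d3.
set n := #|F|.-1.
have Fgt1 := card_finNzRing_gt1 F.
have n0 : (0 < n)%N by rewrite /n; move: Fgt1; move: #|F| => m; slia.
pose rs := enum (predC1 (0 : F)).
have allr : all n.-unity_root rs.
  apply/allP => x; rewrite mem_enum => /= xn0; rewrite unity_rootE.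
  have := expf_card x; rewrite -(ltn_predK Fgt1) exprS -/n => e.
  by apply/eqP; apply: (mulfI xn0); rewrite e mulr1.
have urs : uniq rs by rewrite enum_uniq.
have srs : size rs = n by rewrite /rs -cardE cardC1.
have := has_prim_root n0 allr urs; rewrite srs leqnn => /(_ isT) /hasP[w _ pw].
exists (w ^+ (n %/ 3)).
have := exp_prim_root pw (n %/ 3).
have e : (n = n %/ 3 * 3)%N by rewrite divnK.
have -> : (n %/ gcdn (n %/ 3) n = 3)%N.
  move: (n %/ 3)%N e => k e; rewrite e gcdnMr mulKn //.
  move: n0; rewrite e; slia.
done.
Qed.

Lemma other2 (k0 : 'I_3) : exists k1 k2 : 'I_3, [/\ k1 != k0, k2 != k0 & k1 != k2].
Proof.
case: k0 => [[|[|[|//]]] H].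
- by exists (Ordinal (isT : (1 < 3)%N)), (Ordinal (isT : (2 < 3)%N)).
- by exists (Ordinal (isT : (0 < 3)%N)), (Ordinal (isT : (2 < 3)%N)).
- by exists (Ordinal (isT : (0 < 3)%N)), (Ordinal (isT : (1 < 3)%N)).
Qed.

Theorem mainTheorem10 (F : finFieldType) (p : nat) :
  prime p -> p \in [pchar F] -> p != 2%N -> p != 3%N ->
  (3 %| #|F|.-1)%N ->
  forall tau : F, tau != 0 -> tau != (4%:R)^-1 -> tau != - (50%:R)^-1 ->
  forall t l : nat, (1 <= t)%N -> (t < l)%N ->
    (l <= (num_rat_places tau %/ 3).-1)%N ->
    exists C : {vspace 'rV[F]_(3 * l)},
      [/\ \dim C = (2 * t + 1)%N, has_locality C 2 &
        exists d : nat, [/\ is_min_dist C d, (3 * l - 3 * t - 1 <= d)%N &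
                            lrc_defect (3 * l) (2 * t + 1) d 2 <= 1]].
Proof.
move=> pp pc p2 p3 d3 tau tau0 tau4 tau50 t l t1 tl lN.
have two : 2%:R != 0 :> F.
  rewrite -(dvdn_pcharf pc); apply/negP => /dvdn_leq h; have {h} h := h isT.
  have := prime_gt1 pp; move: p2 h; slia.
have [w pw] := prim3 d3.
pose c := tau - 4%:R^-1.
pose Good := [set u : F | (u != 0) && (u ^+ 2 - u - c != 0) && [exists x, 2%:R * u * x ^+ 3 == u ^+ 2 - u - c]].
have cnt : (#|[set xy : F * F | (xy.2 ^+ 2 == xy.1 ^+ 6 + xy.1 ^+ 3 + tau)%R]| <= 3 * #|Good| + 2)%N := count_good two tau4.
have lG : (l <= #|Good|)%N.
  move: lN; rewrite /num_rat_places; move: cnt.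
  move: #|Good| #|[set xy | _]| => A B; slia.
case: t t1 tl lN => // s _ tl lN.
set t := s.+1.
pose E := enum Good.
have szE : size E = #|Good| by rewrite -cardE.
pose U := fun j : 'I_l => nth 0 E j.
have UG j : U j \in Good by rewrite -mem_enum mem_nth // szE (leq_trans (ltn_ord j) lG).
have Uinj : injective U.
  move=> j j' /eqP; rewrite /U nth_uniq ?enum_uniq // ?szE ?(leq_trans (ltn_ord _) lG) //.
  by move/eqP/val_inj.
have Unz j : U j != 0 by have := UG j; rewrite inE; case/andP; case/andP.
have UK j : U j ^+ 2 - U j - c != 0 by have := UG j; rewrite inE; case/andP; case/andP.
pose r := fun j => odflt 0 [pick x | 2%:R * U j * x ^+ 3 == U j ^+ 2 - U j - c].
have rP j : 2%:R * U j * r j ^+ 3 = U j ^+ 2 - U j - c.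
  rewrite /r; case: pickP => [x /eqP //|H] /=.
  by move: (UG j); rewrite inE => /andP[_ /existsP[x]]; rewrite H.
have rnz j : r j != 0.
  by apply: contra (UK j) => /eqP r0; rewrite -rP r0 expr0n mulr0.
pose Xg := fun j (k : 'I_3) => w ^+ k * r j.
have w3 : w ^+ 3 = 1 by apply: prim_expr_order.
have HX j k : 2%:R * U j * Xg j k ^+ 3 = U j ^+ 2 - U j - c.
  by rewrite /Xg exprMn -exprM mulnC exprM w3 expr1n mul1r rP.
have Xinj j : injective (Xg j).
  move=> k k' /(mulIf (rnz j)) /eqP; rewrite (eq_prim_root_expr pw) !modn_small //.
  by move/eqP/val_inj.
have eqT : (3 * l = #|{: 'I_l * 'I_3}|)%N by rewrite card_prod !card_ord mulnC.
pose e := fun i : 'I_(3 * l) => enum_val (cast_ord eqT i).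
pose e' := fun p : 'I_l * 'I_3 => cast_ord (esym eqT) (enum_rank p).
have ee' : cancel e' e by move=> q; rewrite /e /e' cast_ordKV enum_rankK.
have e'e : cancel e e' by move=> i; rewrite /e /e' enum_valK cast_ordK.
pose ui := fun i => U (e i).1.
pose xi := fun i => Xg (e i).1 (e i).2.
pose G0 : 'M[F]_(t.+1, 3 * l) := \matrix_(k, i) ui i ^+ k.
pose G1 : 'M[F]_(t, 3 * l) := \matrix_(k, i) (xi i * ui i * ui i ^+ k).
pose Gm := col_mx G0 G1.
pose f : 'Hom('rV[F]_(t.+1 + t), 'rV[F]_(3 * l)) := linfun (mulmxr Gm).
pose C := limg f.
have memC v : reflect (exists m, v = m *m Gm) (v \in C).
  apply: (iffP idP) => [/memv_imgP[m _ ->]|[m ->]]; [exists m; by rewrite lfunE | by rewrite -[_ *m _](lfunE (mulmxr Gm)) memv_img ?memvf].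
pose pa := fun m0 : 'rV[F]_t.+1 => \poly_(k < t.+1) m0 0 (inord k).
pose pb := fun m1 : 'rV[F]_t => \poly_(k < t) m1 0 (inord k).
have ev m0 m1 i : (row_mx m0 m1 *m Gm) 0 i = (pa m0).[ui i] + xi i * ui i * (pb m1).[ui i].
  rewrite mul_row_col mxE !mxE !horner_poly mulr_sumr; congr (_ + _); apply: eq_bigr => k _;
    rewrite !mxE inord_val //; ring.
have spa m0 : (size (pa m0) <= t.+1)%N by apply: size_poly.
have spb m1 : (size (pb m1) <= t)%N by apply: size_poly.
have pa0 m0 : pa m0 = 0 -> m0 = 0.
  move=> h; apply/rowP => k; rewrite mxE.
  have := congr1 (fun q : {poly F} => q`_k) h; rewrite /= coef_poly ltn_ord inord_val coef0.
  by [].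
have pb0 m1 : pb m1 = 0 -> m1 = 0.
  move=> h; apply/rowP => k; rewrite mxE.
  have := congr1 (fun q : {poly F} => q`_k) h; rewrite /= coef_poly ltn_ord inord_val coef0.
  by [].
have zc m0 m1 : (pa m0 != 0) || (pb m1 != 0) ->
    (#|[set i | ((row_mx m0 m1 *m Gm) 0 i == 0)%R]| <= 3 * t + 1)%N.
  move=> nz.
  have := zero_bound two Uinj Unz HX Xinj (spa m0) (spb m1) nz.
  apply: leq_trans.
  rewrite -(card_imset _ (can_inj e'e)); apply: subset_leq_card.
  apply/subsetP => _ /imsetP[i Hi ->]; move: Hi; rewrite !inE ev; exact.
have wtE (v : 'rV[F]_(3 * l)) : (wt v + #|[set i | (v 0 i == 0)%R]| = 3 * l)%N.
  rewrite /wt -[RHS](card_ord (3 * l)) -(cardsC [set i | v 0 i != 0]); congr (_ + _).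
  by apply: eq_card => i; rewrite !inE negbK.
have Gi (m : 'rV[F]_(t.+1 + t)) : m *m Gm = 0 -> m = 0.
  rewrite -[m]hsubmxK => h.
  case: (eqVneq (pa (lsubmx m)) 0) => [a0|an0]; case: (eqVneq (pb (rsubmx m)) 0) => [b0|bn0].
  - by rewrite (pa0 _ a0) (pb0 _ b0) row_mx0.
  1-3: have := @zc (lsubmx m) (rsubmx m); rewrite ?an0 ?bn0 ?orbT => /(_ isT).
  1-3: rewrite h (_ : [set i | _] = setT) ?cardsT ?card_ord; [move=> H; exfalso; move: H tl; rewrite /t; slia| apply/setP => i; rewrite !inE mxE eqxx //].
have dimC : \dim C = (t.+1 + t)%N.
  rewrite /C limg_dim_eq ?dimvf ?dim_matrix; first exact: mul1n.
  rewrite capfv; apply/eqP; apply/lker0P => a b; rewrite !lfunE /= => hab.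
  by apply/eqP; rewrite -subr_eq0; apply/eqP/Gi; rewrite mulmxBl hab subrr.
exists C; split.
- by rewrite dimC /t; slia.
- move=> i.
  set j := (e i).1; set k0 := (e i).2.
  have eij : e i = (j, k0) by rewrite /j /k0 -surjective_pairing.
  have [k1 [k2 [n1 n2 n12]]] := other2 k0.
  set I := [set i' | ((e i').1 == j) && (i' != i)].
  have inI k : k != k0 -> e' (j, k) \in I.
    move=> nk; rewrite inE ee' eqxx /=; apply: contra nk => /eqP h.
    by have := congr1 e h; rewrite ee' eij => -[->].
  exists I; split.
  + by rewrite inE eqxx andbF.
  + have -> : I = e @^-1: [set q | (q.1 == j) && (q != e i)].
      by apply/setP => i'; rewrite !inE (inj_eq (can_inj e'e)).
    rewrite -(can2_imset_pre _ ee' e'e) card_imset; last exact: can_inj ee'.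
    have -> : [set q | (q.1 == j) && (q != e i)] = (fun k => (j, k)) @: [set~ k0].
      apply/setP => -[j' k]; rewrite !inE eij /=; apply/idP/imsetP.
        move=> /andP[/eqP -> ne]; exists k => //; rewrite !inE; apply: contra ne => /eqP ->.
        by [].
      case=> k'; rewrite !inE => nk [-> ->]; rewrite eqxx /=; apply: contra nk.
      by rewrite xpair_eqE eqxx.
    rewrite card_imset; last by move=> x y [].
    by rewrite cardsC1 card_ord.
  + move=> a a' ne c1 c2 c1C c2C ca ca' agree.
    have dC : c1 - c2 \in C by rewrite memvB.
    case/memC: dC => m hm.
    rewrite -[m]hsubmxK in hm.
    have zI i' : i' \in I -> (c1 - c2) 0 i' = 0.
      by move=> Hi; rewrite !mxE (agree i' Hi) subrr.
    have evj k : (c1 - c2) 0 (e' (j, k)) = (pa (lsubmx m)).[U j] + Xg j k * (U j * (pb (rsubmx m)).[U j]).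
      by rewrite hm ev /ui /xi ee' /= mulrA.
    have h1 := zI _ (inI _ n1); have h2 := zI _ (inI _ n2).
    rewrite evj in h1; rewrite evj in h2.
    set A := (pa (lsubmx m)).[U j] in h1 h2 evj; set B := U j * _ in h1 h2 evj.
    have hB : (Xg j k1 - Xg j k2) * B = 0.
      have -> : (Xg j k1 - Xg j k2) * B = (A + Xg j k1 * B) - (A + Xg j k2 * B) by ring.
      by rewrite h1 h2 subrr.
    have xn : Xg j k1 - Xg j k2 != 0 by rewrite subr_eq0 (inj_eq (Xinj j)).
    move/eqP: hB; rewrite mulf_eq0 (negbTE xn) /= => /eqP B0.
    have A0 : A = 0 by move: h1; rewrite B0 mulr0 addr0.
    have := evj k0; rewrite -eij e'e A0 B0 mulr0 addr0 !mxE => /eqP; rewrite subr_eq0 ca ca' (negbTE ne).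
    by [].
pose Pd := fun n => [exists v : 'rV[F]_(3 * l), (v \in C) && (v != 0) && (wt v == n)].
have exP : exists n, Pd n.
  exists (wt (vpick C)); apply/existsP; exists (vpick C); rewrite memv_pick eqxx andbT vpick0 /=.
  by apply/negP => /eqP C0; move: dimC; rewrite C0 dimv0.
have lowb v : v \in C -> v != 0 -> (3 * l - 3 * t - 1 <= wt v)%N.
  case/memC => m hm vn0; rewrite -[m]hsubmxK in hm.
  have nz : (pa (lsubmx m) != 0) || (pb (rsubmx m) != 0).
    case: (eqVneq (pa (lsubmx m)) 0) => [a0|//]; case: (eqVneq (pb (rsubmx m)) 0) => [b0|]; last by rewrite orbT.
    by move: vn0; rewrite hm (pa0 _ a0) (pb0 _ b0) row_mx0 mul0mx eqxx.
  have := @zc _ _ nz; rewrite -hm; have := wtE v.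
  move: (wt v) (#|_|) tl; rewrite /t; slia.
exists (ex_minn exP).
case: ex_minnP => d /existsP[v /andP[/andP[vC vn0] /eqP wv]] dmin.
split.
- split; first by exists v => //.
  by move=> c0 c0C c0n0; apply: dmin; apply/existsP; exists c0; rewrite c0C c0n0 eqxx.
- by rewrite -wv; apply: lowb.
- have := lowb v vC vn0; rewrite wv /lrc_defect /ceil_div.
  move: tl; rewrite /t; slia.
Qed.
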